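(* For $\phi_1,\phi_2\in D=\{z\in\mathbb{C};|z|<1\}$ with $\phi_1\ne-\phi_2$, define $$s(\phi_1,\phi_2)=\frac{|1-\phi_1\overline{\phi_2}|^2}{(1-|\phi_1\overline{\phi_2}|^2)^3}\rho^{-2}(1-\rho)^{-3/2}\operatorname{Im}(\phi_1\overline{\phi_2})(|\phi_1|^2-|\phi_2|^2)(1-|\phi_1|^2)(1-|\phi_2|^2),$$ with $\rho=|(1-|\phi_2|^2)\phi_1+(1-|\phi_1|^2)\phi_2|/(1-|\phi_1\overline{\phi_2}|^2)$; this is the skewness of the distribution on the unit circle $\partial D$ with density (w.r.t. arc length) $$f(z)=\frac{1}{2\pi}\frac{|1-\phi_1\overline{\phi_2}|^2}{1-|\phi_1\overline{\phi_2}|^2}\frac{1-|\phi_1|^2}{|z-\phi_1|^2}\frac{1-|\phi_2|^2}{|z-\phi_2|^2}.$$ Then, whenever the quantities involved are defined: (1) $s(\phi_1,\phi_2)=0$ if and only if the density $f$ is symmetric; (2) $s(\phi_1,\phi_2)>0$ ($<0$) if and only if $\operatorname{Im}(\phi_1\overline{\phi_2})(|\phi_1|-|\phi_2|)>0$ ($<0$); (3) for $\phi_1,\phi_2\ne0$, $s(\phi_1,\phi_2)=-s(\phi_1,\overline{\phi_2}\phi_1^2/|\phi_1|^2)=-s(\overline{\phi_1}\phi_2^2/|\phi_2|^2,\phi_2)$; (4) $s(\phi_2,\phi_1)=s(\phi_1,\phi_2)$; (5) $s(\overline{\phi_1},\overline{\phi_2})=-s(\phi_1,\phi_2)$; (6)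 $s(\alpha\phi_1,\alpha\phi_2)=s(\phi_1,\phi_2)$ for all $\alpha\in\partial D$; (7) if $\rho_1,\rho_2>0$ and $\sin(\mu_1-\mu_2)>0$ ($<0$), then $\lim_{\rho_1\to1}s(\rho_1\mathrm{e}^{\mathrm{i}\mu_1},\rho_2\mathrm{e}^{\mathrm{i}\mu_2})=\infty$ ($-\infty$).
   Context: For a random variable $Z$ on the unit circle with $E(Z)\neq0$, the skewness is $E[\operatorname{Im}\{(Z\mathrm{e}^{-\mathrm{i}\zeta})^2\}]/(1-\delta)^{3/2}$ with $\zeta=\arg E(Z)$ and $\delta=|E(Z)|$. *)

(* Defs.v *)
From Stdlib Require Import Reals.
From Coquelicot Require Import Coquelicot.
Open Scope R_scope.

Definition in_D (z : C) : Prop := Cmod z < 1.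

Definition polar (r mu : R) : C := (r * cos mu, r * sin mu).

Definition rho_s (p1 p2 : C) : R :=
  Cmod (Cplus (Cmult (RtoC (1 - (Cmod p2)^2)) p1)
              (Cmult (RtoC (1 - (Cmod p1)^2)) p2))
  / (1 - (Cmod (Cmult p1 (Cconj p2)))^2).

Definition skew_s (p1 p2 : C) : R :=
  let a := Cmult p1 (Cconj p2) in
  let rho := rho_s p1 p2 in
  (Cmod (Cminus (RtoC 1) a))^2 / (1 - (Cmod a)^2)^3
  * / rho^2 * Rpower (1 - rho) (-3/2)
  * Im a * ((Cmod p1)^2 - (Cmod p2)^2)
  * (1 - (Cmod p1)^2) * (1 - (Cmod p2)^2).

Definition dens_f (p1 p2 z : C) : R :=
  let a := Cmult p1 (Cconj p2) in
  / (2 * PI) * ((Cmod (Cminus (RtoC 1) a))^2 / (1 - (Cmod a)^2))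
  * ((1 - (Cmod p1)^2) / (Cmod (Cminus z p1))^2)
  * ((1 - (Cmod p2)^2) / (Cmod (Cminus z p2))^2).

(* a density g on the unit circle is symmetric: invariant under the
   reflection z |-> alpha * conj z (alpha on the unit circle) across some
   line through the origin *)
Definition symmetric_density (g : C -> R) : Prop :=
  exists alpha : C, Cmod alpha = 1 /\
    forall z : C, Cmod z = 1 -> g (Cmult alpha (Cconj z)) = g z.

(* Main.v *)
Require Import Defs.
From Stdlib Require Import Reals Lra Psatz.
From Coquelicot Require Import Coquelicot.
Open Scope R_scope.


Definition F (A B r I m1 m2 : R) : R :=
  A^2 / (1-B^2)^3 * / r^2 * Rpower (1 - r) (-3/2) * I * (m1^2-m2^2) * (1-m1^2)*(1-m2^2).

Lemma skew_F p1 p2 : skew_s p1 p2 =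
  F (Cmod (Cminus (RtoC 1) (Cmult p1 (Cconj p2)))) (Cmod (Cmult p1 (Cconj p2)))
    (rho_s p1 p2) (Im (Cmult p1 (Cconj p2))) (Cmod p1) (Cmod p2).
Proof. reflexivity. Qed.

Lemma Cmod_eq (z w : C) : fst z^2+snd z^2 = fst w^2+snd w^2 -> Cmod z = Cmod w.
Proof. intro H; unfold Cmod; rewrite H; reflexivity. Qed.

Lemma Cmod2 (z : C) : Cmod z ^ 2 = fst z ^2 + snd z ^2.
Proof. unfold Cmod. rewrite pow2_sqrt; [reflexivity| nra]. Qed.

Lemma rho_eq p1 p2 q1 q2 :
  Cmod p1 = Cmod q1 -> Cmod p2 = Cmod q2 ->
  Cmod (Cmult p1 (Cconj p2)) = Cmod (Cmult q1 (Cconj q2)) ->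
  Cmod (Cplus (Cmult (RtoC (1 - (Cmod p2)^2)) p1) (Cmult (RtoC (1 - (Cmod p1)^2)) p2))
  = Cmod (Cplus (Cmult (RtoC (1 - (Cmod q2)^2)) q1) (Cmult (RtoC (1 - (Cmod q1)^2)) q2)) ->
  rho_s p1 p2 = rho_s q1 q2.
Proof. intros. unfold rho_s. rewrite H2, H1. reflexivity. Qed.

Lemma skew_swap p1 p2 : skew_s p2 p1 = skew_s p1 p2.
Proof.
  rewrite !skew_F.
  assert (Hr : rho_s p2 p1 = rho_s p1 p2).
  { unfold rho_s. rewrite Cplus_comm.
    replace (Cmod (Cmult p2 (Cconj p1))) with (Cmod (Cmult p1 (Cconj p2)))
      by (apply Cmod_eq; destruct p1, p2; simpl; ring). reflexivity. }
  rewrite Hr.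
  replace (Cmod (Cminus 1 (Cmult p2 (Cconj p1)))) with (Cmod (Cminus 1 (Cmult p1 (Cconj p2))))
    by (apply Cmod_eq; destruct p1, p2; simpl; ring).
  replace (Cmod (Cmult p2 (Cconj p1))) with (Cmod (Cmult p1 (Cconj p2)))
    by (apply Cmod_eq; destruct p1, p2; simpl; ring).
  replace (Im (Cmult p2 (Cconj p1))) with (- Im (Cmult p1 (Cconj p2)))
    by (destruct p1, p2; simpl; ring).
  unfold F. ring.
Qed.

Lemma skew_conj p1 p2 : skew_s (Cconj p1) (Cconj p2) = - skew_s p1 p2.
Proof.
  rewrite !skew_F.
  assert (H1 : Cmod (Cconj p1) = Cmod p1) by (apply Cmod_eq; destruct p1; simpl; ring).
  assert (H2 : Cmod (Cconj p2) = Cmod p2) by (apply Cmod_eq; destruct p2; simpl; ring).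
  assert (Hr : rho_s (Cconj p1) (Cconj p2) = rho_s p1 p2).
  { apply rho_eq; auto.
    - apply Cmod_eq; destruct p1, p2; simpl; ring.
    - rewrite H1, H2. apply Cmod_eq; destruct p1, p2; simpl; ring. }
  rewrite Hr, H1, H2.
  replace (Cmod (Cminus 1 (Cmult (Cconj p1) (Cconj (Cconj p2))))) with (Cmod (Cminus 1 (Cmult p1 (Cconj p2))))
    by (apply Cmod_eq; destruct p1, p2; simpl; ring).
  replace (Cmod (Cmult (Cconj p1) (Cconj (Cconj p2)))) with (Cmod (Cmult p1 (Cconj p2)))
    by (apply Cmod_eq; destruct p1, p2; simpl; ring).
  replace (Im (Cmult (Cconj p1) (Cconj (Cconj p2)))) with (- Im (Cmult p1 (Cconj p2)))
    by (destruct p1, p2; simpl; ring).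
  unfold F. ring.
Qed.

Lemma skew_rot p1 p2 al : Cmod al = 1 ->
  skew_s (Cmult al p1) (Cmult al p2) = skew_s p1 p2.
Proof.
  intro Ha. assert (Ha2 : fst al ^2 + snd al ^2 = 1).
  { rewrite <- Cmod2, Ha. ring. }
  rewrite !skew_F.
  assert (H1 : Cmod (Cmult al p1) = Cmod p1) by (apply Cmod_eq; destruct p1, al; simpl in *; nra).
  assert (H2 : Cmod (Cmult al p2) = Cmod p2) by (apply Cmod_eq; destruct p2, al; simpl in *; nra).
  assert (Ea : Cmult (Cmult al p1) (Cconj (Cmult al p2)) = Cmult p1 (Cconj p2)).
  { destruct p1, p2, al; cbn [fst snd] in *. unfold Cmult, Cconj; simpl. f_equal;
    match goal with |- ?l = ?r => replace r with ((r3^2+r4^2)*r) by (rewrite Ha2; ring); ring end. }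
  assert (Hr : rho_s (Cmult al p1) (Cmult al p2) = rho_s p1 p2).
  { apply rho_eq; auto.
    - rewrite Ea; reflexivity.
    - rewrite H1, H2. apply Cmod_eq. destruct p1, p2, al; cbn [fst snd] in *.
      set (u := 1 - sqrt (r1 ^ 2 + r2 ^ 2) ^ 2). set (v := 1 - sqrt (r ^ 2 + r0 ^ 2) ^ 2).
      unfold Cmult, Cplus, RtoC; simpl.
      match goal with |- ?l = ?r => replace r with ((r3^2+r4^2)*r) by (rewrite Ha2; ring); ring end. }
  rewrite Hr, H1, H2, Ea. reflexivity.
Qed.


Lemma n0 (p : C) : p <> RtoC 0 -> fst p ^2 + snd p ^2 <> 0.
Proof. intros H E. apply H. destruct p as [x y]; cbn [fst snd] in *.
  assert (x = 0) by nra. assert (y = 0) by nra. subst. reflexivity. Qed.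

Lemma skew_refl p1 p2 : p1 <> RtoC 0 ->
  skew_s p1 p2 = - skew_s p1 (Cmult (Cmult (Cconj p2) (Cmult p1 p1)) (RtoC (/ (Cmod p1)^2))).
Proof.
  intro Hp. pose proof (n0 p1 Hp) as Hn.
  set (q := Cmult (Cmult (Cconj p2) (Cmult p1 p1)) (RtoC (/ (Cmod p1)^2))).
  assert (Hq : q = Cmult (Cmult (Cconj p2) (Cmult p1 p1)) (RtoC (/ (fst p1 ^2 + snd p1^2))))
    by (unfold q; rewrite Cmod2; reflexivity).
  clearbody q. subst q.
  rewrite !skew_F.
  assert (H2 : Cmod (Cmult (Cmult (Cconj p2) (Cmult p1 p1)) (RtoC (/ (fst p1 ^2 + snd p1^2)))) = Cmod p2).
  { apply Cmod_eq. destruct p1, p2; cbn [fst snd] in *. unfold Cmult, Cconj, RtoC; cbn [fst snd]. field; auto. }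
  assert (Ea : Cmult p1 (Cconj (Cmult (Cmult (Cconj p2) (Cmult p1 p1)) (RtoC (/ (fst p1 ^2 + snd p1^2)))))
      = Cconj (Cmult p1 (Cconj p2))).
  { destruct p1, p2; cbn [fst snd] in *. unfold Cmult, Cconj, RtoC; cbn [fst snd]. f_equal; field; auto. }
  assert (Hr : rho_s p1 (Cmult (Cmult (Cconj p2) (Cmult p1 p1)) (RtoC (/ (fst p1 ^2 + snd p1^2)))) = rho_s p1 p2).
  { apply rho_eq; auto.
    - rewrite Ea. apply Cmod_eq. destruct p1, p2; cbn [fst snd] in *. unfold Cmult, Cconj, RtoC; simpl. ring.
    - rewrite H2, Cmod2. apply Cmod_eq. destruct p1, p2; cbn [fst snd] in *.
      unfold Cmult, Cplus, Cconj, RtoC; cbn [fst snd]. field; auto. }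
  rewrite Hr, H2, Ea.
  replace (Cmod (Cminus 1 (Cconj (Cmult p1 (Cconj p2))))) with (Cmod (Cminus 1 (Cmult p1 (Cconj p2))))
    by (apply Cmod_eq; destruct p1, p2; unfold Cminus, Cplus, Copp, Cmult, Cconj, RtoC; simpl; ring).
  replace (Cmod (Cconj (Cmult p1 (Cconj p2)))) with (Cmod (Cmult p1 (Cconj p2)))
    by (apply Cmod_eq; destruct p1, p2; simpl; ring).
  replace (Im (Cconj (Cmult p1 (Cconj p2)))) with (- Im (Cmult p1 (Cconj p2)))
    by (destruct p1, p2; simpl; ring).
  unfold F. ring.
Qed.

Lemma skew_refl2 p1 p2 : p2 <> RtoC 0 ->
  skew_s p1 p2 = - skew_s (Cmult (Cmult (Cconj p1) (Cmult p2 p2)) (RtoC (/ (Cmod p2)^2))) p2.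
Proof.
  intro H. rewrite skew_swap, (skew_refl p2 p1 H), skew_swap. reflexivity.
Qed.


Definition Eq6 (c d x1 y1 x2 y2 zx zy : R) : Prop :=
  (1 + (x1^2+y1^2) - 2*(zx*(c*x1+d*y1) + zy*(d*x1-c*y1))) *
  (1 + (x2^2+y2^2) - 2*(zx*(c*x2+d*y2) + zy*(d*x2-c*y2))) =
  (1 + (x1^2+y1^2) - 2*(zx*x1 + zy*y1)) * (1 + (x2^2+y2^2) - 2*(zx*x2 + zy*y2)).

Lemma real_core c d x1 y1 x2 y2 :
  (forall zx zy, zx^2+zy^2 = 1 -> Eq6 c d x1 y1 x2 y2 zx zy) ->
  let ux := (1+(x2^2+y2^2))*x1 + (1+(x1^2+y1^2))*x2 in
  let uy := (1+(x2^2+y2^2))*y1 + (1+(x1^2+y1^2))*y2 in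
  let vx := x1*x2 - y1*y2 in let vy := x1*y2+y1*x2 in
  (c*ux + d*uy = ux /\ d*ux - c*uy = uy) /\
  ((c^2-d^2)*vx + 2*c*d*vy = vx /\ 2*c*d*vx - (c^2-d^2)*vy = vy).
Proof.
  intros H ux uy vx vy.
  pose proof (H 1 0 ltac:(lra)) as E1.
  pose proof (H (-1) 0 ltac:(lra)) as E2.
  pose proof (H 0 1 ltac:(lra)) as E3.
  pose proof (H 0 (-1) ltac:(lra)) as E4.
  pose proof (H (3/5) (4/5) ltac:(lra)) as E5.
  pose proof (H (-3/5) (-4/5) ltac:(lra)) as E6.
  unfold Eq6 in *. unfold ux, uy, vx, vy.
  split; split; lra.
Qed.


Lemma modD p : in_D p -> 0 <= Cmod p < 1.
Proof. intro H; unfold in_D in H; split; [apply Cmod_ge_0|exact H]. Qed.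

Lemma moda p1 p2 : Cmod (Cmult p1 (Cconj p2)) = Cmod p1 * Cmod p2.
Proof. rewrite Cmod_mult, Cmod_conj. reflexivity. Qed.

Lemma modA p1 p2 : in_D p1 -> in_D p2 ->
  0 < 1 - Cmod p1 * Cmod p2 <= Cmod (Cminus (RtoC 1) (Cmult p1 (Cconj p2))).
Proof.
  intros H1 H2. destruct (modD _ H1) as [M1 M1']; destruct (modD _ H2) as [M2 M2'].
  split. nra.
  pose proof (Cmod_triangle (Cminus (RtoC 1) (Cmult p1 (Cconj p2))) (Cmult p1 (Cconj p2))) as T.
  replace (Cplus (Cminus (RtoC 1) (Cmult p1 (Cconj p2))) (Cmult p1 (Cconj p2))) with (RtoC 1) in T
    by (unfold Cminus; ring).
  rewrite Cmod_1, moda in T. lra.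
Qed.

Lemma rho0 p1 p2 : in_D p1 -> in_D p2 -> rho_s p1 p2 = 0 -> Im (Cmult p1 (Cconj p2)) = 0.
Proof.
  intros H1 H2 Hr. destruct (modD _ H1) as [M1 M1']; destruct (modD _ H2) as [M2 M2'].
  unfold rho_s in Hr. rewrite moda in Hr.
  assert (Hm : 0 <= Cmod p1 * Cmod p2 < 1) by (split; nra).
  assert (Hd : 0 < 1 - (Cmod p1 * Cmod p2)^2) by nra.
  assert (Hw : Cmod (Cplus (Cmult (RtoC (1 - (Cmod p2)^2)) p1) (Cmult (RtoC (1 - (Cmod p1)^2)) p2)) = 0).
  { unfold Rdiv in Hr. apply Rmult_integral in Hr. destruct Hr as [Hr|Hr]; auto.
    exfalso. apply Rinv_neq_0_compat in Hr; [exact Hr| lra]. }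
  apply Cmod_eq_0 in Hw.
  assert (Hk : 0 < 1 - Cmod p2 ^2) by nra.
  set (k1 := 1 - Cmod p2 ^2) in *. set (k2 := 1 - Cmod p1 ^2) in *. clearbody k1 k2.
  destruct p1 as [x1 y1], p2 as [x2 y2].
  unfold Cplus, Cmult, RtoC in Hw. cbn [fst snd] in Hw. injection Hw as Ex Ey.
  cbn [Im Cmult Cconj fst snd].
  match type of Ex with ?lx = _ => match type of Ey with ?ly = _ =>
    assert (E : k1 * (x1 * - y2 + y1 * x2) = x2 * ly - y2 * lx) by ring end end.
  rewrite Ex, Ey in E. replace (x2 * 0 - y2 * 0) with 0 in E by ring.
  apply Rmult_integral in E. destruct E; [lra | auto].
Qed.

Lemma decomp p1 p2 : in_D p1 -> in_D p2 -> exists P,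
  skew_s p1 p2 = P * (Im (Cmult p1 (Cconj p2)) * (Cmod p1 ^2 - Cmod p2 ^2)) /\
  (P > 0 \/ Im (Cmult p1 (Cconj p2)) = 0).
Proof.
  intros H1 H2. rewrite skew_F.
  destruct (modA _ _ H1 H2) as [HA HA']. destruct (modD _ H1) as [M1 M1']; destruct (modD _ H2) as [M2 M2'].
  rewrite moda.
  set (A := Cmod (Cminus (RtoC 1) (Cmult p1 (Cconj p2)))) in *.
  set (r := rho_s p1 p2).
  exists (A^2 / (1 - (Cmod p1 * Cmod p2)^2)^3 * / r^2 * Rpower (1 - r) (-3/2)
          * (1 - Cmod p1 ^2) * (1 - Cmod p2^2)).
  split. { unfold F. ring. }
  destruct (Req_dec r 0) as [E|E].
  - right. apply rho0; auto.
  - left. assert (0 < Rpower (1 - r) (-3/2)) by (unfold Rpower; apply exp_pos).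
    assert (0 < / r^2) by (apply Rinv_0_lt_compat; nra).
    assert (Hm : 0 <= Cmod p1 * Cmod p2 < 1) by (split; nra).
    assert (0 < / (1 - (Cmod p1 * Cmod p2)^2)^3) by (apply Rinv_0_lt_compat; apply pow_lt; nra).
    assert (0 < A^2) by nra.
    assert (0 < 1 - Cmod p1 ^2) by nra. assert (0 < 1 - Cmod p2 ^2) by nra.
    unfold Rdiv. repeat apply Rmult_lt_0_compat; auto; lra.
Qed.


Lemma Cmod_one (z : C) : fst z^2 + snd z^2 = 1 -> Cmod z = 1.
Proof. intro H; unfold Cmod; rewrite H; apply sqrt_1. Qed.

Lemma unit2 (a : C) : Cmod a = 1 -> fst a ^2 + snd a^2 = 1.
Proof. intro H. rewrite <- Cmod2, H. ring. Qed.

Lemma refl_mod al z p : Cmod al = 1 ->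
  Cmod (Cminus (Cmult al (Cconj z)) p) = Cmod (Cminus z (Cmult al (Cconj p))).
Proof.
  intro Ha. apply unit2 in Ha. apply Cmod_eq.
  destruct al as [c d], z as [zx zy], p as [px py]; cbn [fst snd] in *.
  unfold Cminus, Cplus, Copp, Cmult, Cconj; cbn [fst snd].
  apply Rminus_diag_uniq.
  transitivity ((c^2+d^2-1)*(zx^2+zy^2-px^2-py^2)); [ring | rewrite Ha; ring].
Qed.

Lemma realW (al u v : C) : u = Cmult al (Cconj u) -> v = Cmult (Cmult al al) (Cconj v) ->
  Im (Cmult (Cmult u u) (Cconj v)) = 0.
Proof.
  intros Hu Hv.
  assert (E : Cmult (Cmult u u) (Cconj v) = Cconj (Cmult (Cmult u u) (Cconj v))).
  { transitivity (Cmult (Cmult (Cmult al (Cconj u)) (Cmult al (Cconj u))) (Cconj v)).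
    { rewrite <- Hu. reflexivity. }
    rewrite !Cmult_conj, Cconj_conj.
    transitivity (Cmult (Cmult (Cconj u) (Cconj u)) (Cmult (Cmult al al) (Cconj v))).
    { ring. }
    rewrite <- Hv. reflexivity. }
  set (w := Cmult (Cmult u u) (Cconj v)) in *. clearbody w.
  destruct w as [a b]. apply (f_equal snd) in E. unfold Cconj in E. cbn [fst snd] in E.
  cbn [Im snd]. lra.
Qed.

Lemma dc k a1 a2 A B C D : 0<k->0<a1->0<a2->0<A->0<B->0<C->0<D->
  k*(a1/A)*(a2/B) = k*(a1/C)*(a2/D) -> A*B = C*D.
Proof.
  intros. assert (E : (k*a1*a2) * / (A*B) = (k*a1*a2) * / (C*D)).
  { replace (k*a1*a2 * /(A*B)) with (k*(a1/A)*(a2/B)) by (field; lra).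
    replace (k*a1*a2 * /(C*D)) with (k*(a1/C)*(a2/D)) by (field; lra). auto. }
  apply Rmult_eq_reg_l in E; [| assert (0 < k*a1*a2) by (repeat apply Rmult_lt_0_compat; auto); lra].
  rewrite <- (Rinv_inv (A*B)), E, Rinv_inv. reflexivity.
Qed.

Lemma circ_pos z q : Cmod z = 1 -> Cmod q < 1 -> 0 < Cmod (Cminus z q).
Proof.
  intros Hz Hq. pose proof (Cmod_triangle (Cminus z q) q) as T.
  replace (Cplus (Cminus z q) q) with z in T by (unfold Cminus; ring). lra.
Qed.

Lemma sym_fwd p1 p2 : in_D p1 -> in_D p2 -> symmetric_density (dens_f p1 p2) ->
  Im (Cmult p1 (Cconj p2)) = 0 \/ Cmod p1 = Cmod p2.
Proof.
  intros H1 H2 [al [Ha Hs]].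
  destruct (modD _ H1) as [M1 M1']; destruct (modD _ H2) as [M2 M2'].
  destruct (modA _ _ H1 H2) as [HA HA'].
  pose proof (unit2 _ Ha) as Ha2.
  assert (Hmm : 0 <= Cmod p1 * Cmod p2 < 1) by (split; nra).
  assert (Core : forall zx zy, zx^2+zy^2 = 1 ->
     Eq6 (fst al) (snd al) (fst p1) (snd p1) (fst p2) (snd p2) zx zy).
  { intros zx zy Hz.
    set (z := (zx, zy) : C).
    assert (Hz1 : Cmod z = 1) by (apply Cmod_one; exact Hz).
    specialize (Hs z Hz1). unfold dens_f in Hs. rewrite !refl_mod in Hs by exact Ha.
    assert (Hq1 : Cmod (Cmult al (Cconj p1)) < 1) by (rewrite Cmod_mult, Cmod_conj, Ha; lra).
    assert (Hq2 : Cmod (Cmult al (Cconj p2)) < 1) by (rewrite Cmod_mult, Cmod_conj, Ha; lra).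
    pose proof (circ_pos _ _ Hz1 Hq1). pose proof (circ_pos _ _ Hz1 Hq2).
    pose proof (circ_pos _ _ Hz1 H1). pose proof (circ_pos _ _ Hz1 H2).
    apply dc in Hs.
    2:{ rewrite moda. apply Rmult_lt_0_compat.
        - apply Rinv_0_lt_compat. pose proof PI_RGT_0. lra.
        - apply Rdiv_lt_0_compat; nra. }
    all: try (apply pow_lt; assumption).
    all: try nra.
    rewrite !Cmod2 in Hs. unfold Eq6.
    destruct al as [c d], p1 as [x1 y1], p2 as [x2 y2]; cbn [fst snd] in *.
    unfold z, Cminus, Cplus, Copp, Cmult, Cconj in Hs; cbn [fst snd] in Hs.
    match goal with |- ?l1 * ?l2 = ?r1 * ?r2 =>
      match type of Hs with ?L1 * ?L2 = ?R1 * ?R2 =>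
        replace l1 with L1; [replace l2 with L2; [replace r1 with R1; [replace r2 with R2; [exact Hs|]|]|]|] end end;
    apply Rminus_diag_uniq;
    first [ transitivity ((zx^2+zy^2-1) + (c^2+d^2-1)*(x1^2+y1^2)); [ring | rewrite Hz, Ha2; ring]
          | transitivity ((zx^2+zy^2-1) + (c^2+d^2-1)*(x2^2+y2^2)); [ring | rewrite Hz, Ha2; ring]
          | transitivity (-(zx^2+zy^2-1) - (c^2+d^2-1)*(x1^2+y1^2)); [ring | rewrite Hz, Ha2; ring]
          | transitivity (-(zx^2+zy^2-1) - (c^2+d^2-1)*(x2^2+y2^2)); [ring | rewrite Hz, Ha2; ring]
          | transitivity (-(zx^2+zy^2-1)); [ring | rewrite Hz; ring]
          | transitivity ((zx^2+zy^2-1)); [ring | rewrite Hz; ring] ]. }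
  apply real_core in Core. cbv zeta in Core.
  destruct Core as [[U1 U2] [V1 V2]].
  assert (Hn1 : Cmod p1 ^2 = fst p1 ^2 + snd p1^2) by apply Cmod2.
  assert (Hn2 : Cmod p2 ^2 = fst p2 ^2 + snd p2^2) by apply Cmod2.
  set (m1 := Cmod p1) in *. set (m2 := Cmod p2) in *. clearbody m1 m2.
  destruct al as [c d], p1 as [x1 y1], p2 as [x2 y2]; cbn [fst snd] in *.
  set (ux := (1 + (x2 ^ 2 + y2 ^ 2)) * x1 + (1 + (x1 ^ 2 + y1 ^ 2)) * x2) in *.
  set (uy := (1 + (x2 ^ 2 + y2 ^ 2)) * y1 + (1 + (x1 ^ 2 + y1 ^ 2)) * y2) in *.
  set (vx := x1 * x2 - y1 * y2) in *. set (vy := x1 * y2 + y1 * x2) in *.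
  assert (W : Im (Cmult (Cmult (ux,uy) (ux,uy)) (Cconj (vx,vy))) = 0).
  { apply (realW (c,d)); unfold Cmult, Cconj; cbn [fst snd]; f_equal; lra. }
  unfold Cmult, Cconj in W; cbn [fst snd Im] in W.
  assert (E : (y1*x2 - x1*y2) * ((1 + m2^2)^2 * m1^2 - (1+m1^2)^2 * m2^2) = 0).
  { rewrite Hn1, Hn2. rewrite <- W. unfold ux, uy, vx, vy. ring. }
  unfold Cmult, Cconj; cbn [fst snd Im].
  apply Rmult_integral in E. destruct E as [E|E].
  - left. lra.
  - right.
    assert (E2 : ((1 + m2^2) * m1 - (1+m1^2) * m2) * ((1 + m2^2) * m1 + (1+m1^2) * m2) = 0)
      by (rewrite <- E; ring).
    apply Rmult_integral in E2. destruct E2 as [E2|E2].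
    + assert (E3 : (m1 - m2) * (1 - m1*m2) = 0) by (rewrite <- E2; ring).
      apply Rmult_integral in E3. destruct E3; lra.
    + assert (0 <= (1 + m2^2) * m1) by nra. assert (0 <= (1 + m1^2) * m2) by nra.
      assert ((1 + m2^2) * m1 = 0) by lra. assert ((1 + m1^2) * m2 = 0) by lra.
      assert (m1 = 0) by nra. assert (m2 = 0) by nra. lra.
Qed.


Lemma sym_back p1 p2 al : Cmod al = 1 ->
  ((Cmult al (Cconj p1) = p1 /\ Cmult al (Cconj p2) = p2) \/
   (Cmult al (Cconj p1) = p2 /\ Cmult al (Cconj p2) = p1 /\ Cmod p1 = Cmod p2)) ->
  symmetric_density (dens_f p1 p2).
Proof.
  intros Ha H. exists al. split; auto. intros z Hz. unfold dens_f.
  rewrite !refl_mod by exact Ha.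
  destruct H as [[E1 E2]|[E1 [E2 E3]]]; rewrite E1, E2; [reflexivity|].
  rewrite E3. ring.
Qed.

Lemma sym_of p1 p2 : in_D p1 -> in_D p2 ->
  Im (Cmult p1 (Cconj p2)) = 0 \/ Cmod p1 = Cmod p2 -> symmetric_density (dens_f p1 p2).
Proof.
  intros H1 H2 [HI|HM].
  - destruct (Req_dec (fst p1 ^2 + snd p1^2) 0) as [Z1|Z1].
    + assert (P1 : p1 = RtoC 0).
      { destruct p1 as [x y]; cbn [fst snd] in Z1. assert (x = 0) by nra. assert (y = 0) by nra.
        subst; reflexivity. }
      destruct (Req_dec (fst p2 ^2 + snd p2^2) 0) as [Z2|Z2].
      * assert (P2 : p2 = RtoC 0).
        { destruct p2 as [x y]; cbn [fst snd] in Z2. assert (x = 0) by nra. assert (y = 0) by nra.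
          subst; reflexivity. }
        apply (sym_back p1 p2 (RtoC 1)).
        { apply Cmod_1. }
        left; subst; split; unfold Cmult, Cconj, RtoC; cbn [fst snd]; f_equal; ring.
      * apply (sym_back p1 p2 (Cmult (Cmult p2 p2) (RtoC (/ (fst p2 ^2 + snd p2^2))))).
        { apply Cmod_one. destruct p2 as [x y]; unfold Cmult, RtoC; cbn [fst snd] in *. field; auto. }
        left. subst p1. destruct p2 as [x y]; unfold Cmult, Cconj, RtoC; cbn [fst snd] in *.
        split; f_equal; field; auto.
    + apply (sym_back p1 p2 (Cmult (Cmult p1 p1) (RtoC (/ (fst p1 ^2 + snd p1^2))))).
      { apply Cmod_one. destruct p1 as [x y]; unfold Cmult, RtoC; cbn [fst snd] in *. field; auto. }
      left. destruct p1 as [x1 y1], p2 as [x2 y2]; unfold Cmult, Cconj, RtoC in *; cbn [fst snd Im] in *.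
      split; f_equal; try (field; auto).
      * apply Rminus_diag_uniq.
        transitivity (-2 * y1 / (x1^2+y1^2) * (x1 * - y2 + y1 * x2)); [field; auto| rewrite HI; ring].
      * apply Rminus_diag_uniq.
        transitivity (2 * x1 / (x1^2+y1^2) * (x1 * - y2 + y1 * x2)); [field; auto| rewrite HI; ring].
  - assert (HM2 : fst p1 ^2 + snd p1^2 = fst p2 ^2 + snd p2^2) by (rewrite <- !Cmod2, HM; reflexivity).
    destruct (Req_dec (fst p1 ^2 + snd p1^2) 0) as [Z1|Z1].
    + assert (P1 : p1 = RtoC 0).
      { destruct p1 as [x y]; cbn [fst snd] in Z1. assert (x = 0) by nra. assert (y = 0) by nra.
        subst; reflexivity. }
      assert (P2 : p2 = RtoC 0).
      { destruct p2 as [x y]; cbn [fst snd] in *. assert (x = 0) by nra. assert (y = 0) by nra.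
        subst; reflexivity. }
      apply (sym_back p1 p2 (RtoC 1)).
      { apply Cmod_1. }
      left; subst; split; unfold Cmult, Cconj, RtoC; cbn [fst snd]; f_equal; ring.
    + apply (sym_back p1 p2 (Cmult (Cmult p2 p1) (RtoC (/ (fst p1 ^2 + snd p1^2))))).
      { apply Cmod_one. destruct p1 as [x1 y1], p2 as [x2 y2]; unfold Cmult, RtoC; cbn [fst snd] in *.
        apply Rminus_diag_uniq.
        transitivity ((x2^2+y2^2 - (x1^2+y1^2)) / (x1^2+y1^2)); [field; auto| rewrite HM2; unfold Rdiv; ring]. }
      right. split; [|split; [|exact HM]];
      destruct p1 as [x1 y1], p2 as [x2 y2]; unfold Cmult, Cconj, RtoC in *; cbn [fst snd] in *;
      f_equal; try (field; auto).
      * apply Rminus_diag_uniq.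
        transitivity (x1 * (x2^2+y2^2 - (x1^2+y1^2)) / (x1^2+y1^2)); [field; auto| rewrite HM2; unfold Rdiv; ring].
      * apply Rminus_diag_uniq.
        transitivity (y1 * (x2^2+y2^2 - (x1^2+y1^2)) / (x1^2+y1^2)); [field; auto| rewrite HM2; unfold Rdiv; ring].
Qed.



Lemma part12 p1 p2 : in_D p1 -> in_D p2 ->
  (skew_s p1 p2 = 0 <-> symmetric_density (dens_f p1 p2)) /\
  (skew_s p1 p2 > 0 <-> Im (Cmult p1 (Cconj p2)) * (Cmod p1 - Cmod p2) > 0) /\
  (skew_s p1 p2 < 0 <-> Im (Cmult p1 (Cconj p2)) * (Cmod p1 - Cmod p2) < 0).
Proof.
  intros H1 H2.
  destruct (modD _ H1) as [M1 M1']; destruct (modD _ H2) as [M2 M2'].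
  assert (Z : skew_s p1 p2 = 0 <-> Im (Cmult p1 (Cconj p2)) = 0 \/ Cmod p1 = Cmod p2).
  { destruct (decomp _ _ H1 H2) as [P [E [HP|HI]]]; rewrite E.
    - split.
      + intro Z. apply Rmult_integral in Z. destruct Z as [Z|Z]; [lra|].
        apply Rmult_integral in Z. destruct Z as [Z|Z]; [left; auto|right].
        assert (Z' : (Cmod p1 - Cmod p2) * (Cmod p1 + Cmod p2) = 0) by (rewrite <- Z; ring).
        apply Rmult_integral in Z'. destruct Z'; lra.
      + intros [Z|Z]; rewrite Z; ring.
    - rewrite HI. split; [intros _; left; reflexivity| intros _; ring]. }
  split.
  { rewrite Z. split; [apply sym_of; auto| apply sym_fwd; auto]. }
  destruct (decomp _ _ H1 H2) as [P [E [HP|HI]]]; rewrite E;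
  set (I := Im (Cmult p1 (Cconj p2))) in *.
  - destruct (Req_dec (Cmod p1 + Cmod p2) 0) as [S|S].
    + assert (Cmod p1 = 0) by lra. assert (Cmod p2 = 0) by lra.
      replace (P * (I * (Cmod p1 ^ 2 - Cmod p2 ^ 2))) with 0 by (rewrite H, H0; ring).
      replace (I * (Cmod p1 - Cmod p2)) with 0 by (rewrite H, H0; ring). lra.
    + assert (K : 0 < P * (Cmod p1 + Cmod p2)) by (apply Rmult_lt_0_compat; lra).
      replace (P * (I * (Cmod p1 ^ 2 - Cmod p2 ^ 2))) with ((P * (Cmod p1 + Cmod p2)) * (I * (Cmod p1 - Cmod p2))) by ring.
      set (K' := P * (Cmod p1 + Cmod p2)) in *. set (Y := I * (Cmod p1 - Cmod p2)).
      clearbody K' Y. clear E.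
      split; split; intro Hy.
      * destruct (Rle_or_lt Y 0); [|lra]. assert (K' * Y <= 0) by (apply Rmult_le_0_l; lra). lra.
      * apply Rmult_lt_0_compat; lra.
      * destruct (Rle_or_lt 0 Y); [|lra]. assert (0 <= K' * Y) by (apply Rmult_le_pos; lra). lra.
      * assert (0 < K' * (- Y)) by (apply Rmult_lt_0_compat; lra). lra.
  - fold I in HI. rewrite HI. replace (P * (0 * (Cmod p1 ^ 2 - Cmod p2 ^ 2))) with 0 by ring.
    replace (0 * (Cmod p1 - Cmod p2)) with 0 by ring. lra.
Qed.


Lemma Rpower_anti x z y : 0 < x -> x <= z -> y < 0 -> Rpower z y <= Rpower x y.
Proof.
  intros Hx Hxz Hy. unfold Rpower.
  assert (ln x <= ln z) by (apply ln_le; auto).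
  assert (y * ln z <= y * ln x) by nra.
  destruct (Req_dec (y * ln z) (y * ln x)) as [E|E]; [rewrite E; lra|].
  left. apply exp_increasing. lra.
Qed.

Lemma Rpower_half t : 0 < t -> t * Rpower t (-3/2) = / sqrt t.
Proof.
  intro Ht. rewrite <- (Rpower_1 t Ht) at 1. rewrite <- Rpower_plus.
  replace (1 + -3/2) with (- / 2) by field. rewrite Rpower_Ropp, Rpower_sqrt; auto.
Qed.

Lemma core_bound A rho r r2 S :
  0 < r2 < 1 -> 0 < S -> 1/2 <= r < 1 -> 1 - r < (1 - r2^2)/4 ->
  1 - r*r2 <= A -> 0 < rho < 1 -> 1 - rho <= (1+r2)/(1-r2) * (1-r) ->
  ((1-r2)^2 * (r2*S/2) * ((1-r2^2)/2) * (1-r2^2)) / ((1+r2)/(1-r2)) * / sqrt ((1+r2)/(1-r2) * (1-r))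
  <= A^2/(1-(r*r2)^2)^3 * /rho^2 * Rpower(1-rho)(-3/2) * (r*r2*S) * (r^2-r2^2) * (1-r^2) * (1-r2^2).
Proof.
  intros Hr2 HS Hr Hr' HA Hrho Hrho'.
  set (C := (1+r2)/(1-r2)).
  assert (HC : 0 < C) by (unfold C; apply Rdiv_lt_0_compat; lra).
  set (t := C * (1-r)).
  assert (Ht : 0 < t) by (unfold t; nra).
  assert (E : ((1-r2)^2 * (r2*S/2) * ((1-r2^2)/2) * (1-r2^2)) / C * / sqrt t
     = (1-r2)^2 * 1 * Rpower t (-3/2) * (r2*S/2) * ((1-r2^2)/2) * (1-r) * (1-r2^2)).
  { rewrite <- (Rpower_half t Ht). unfold t. field. lra. }
  rewrite E.
  assert (P1 : 0 <= Rpower t (-3/2)) by (unfold Rpower; left; apply exp_pos).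
  assert (Hrr : 0 <= r*r2 < 1) by (split; nra).
  assert (HD : 0 < 1-(r*r2)^2 <= 1) by (split; nra).
  assert (G1 : (1-r2)^2 <= A^2/(1-(r*r2)^2)^3).
  { assert (0 < / (1-(r*r2)^2)^3) by (apply Rinv_0_lt_compat; apply pow_lt; lra).
    assert (1 <= / (1-(r*r2)^2)^3).
    { rewrite <- Rinv_1 at 1. apply Rinv_le_contravar. apply pow_lt; lra.
      replace 1 with (1^3) by ring. apply pow_incr; lra. }
    assert (1 - r2 <= 1 - r*r2) by nra.
    assert ((1-r2)^2 <= A^2) by nra.
    unfold Rdiv. nra. }
  assert (G2 : 1 <= / rho^2).
  { rewrite <- Rinv_1 at 1. apply Rinv_le_contravar; nra. }
  assert (G3 : Rpower t (-3/2) <= Rpower (1-rho) (-3/2)) by (apply Rpower_anti; [lra| unfold t, C; lra | lra]).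
  assert (0 < r2*S) by nra. assert (G4 : r2*S/2 <= r*r2*S) by nra.
  assert (G5 : (1-r2^2)/2 <= r^2 - r2^2) by nra.
  assert (G6 : 1 - r <= 1 - r^2) by nra.
  apply Rmult_le_compat; [repeat apply Rmult_le_pos; nra | nra | | lra].
  apply Rmult_le_compat; [repeat apply Rmult_le_pos; nra | nra | | lra].
  apply Rmult_le_compat; [repeat apply Rmult_le_pos; nra | nra | | lra].
  apply Rmult_le_compat; [repeat apply Rmult_le_pos; nra | nra | | lra].
  apply Rmult_le_compat; [repeat apply Rmult_le_pos; nra | nra | | lra].
  apply Rmult_le_compat; [nra | nra | lra | lra].
Qed.


Lemma polar_mod r mu : 0 <= r -> Cmod (polar r mu) = r.
Proof.
  intro H. unfold Cmod, polar; cbn [fst snd].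
  pose proof (sin2_cos2 mu) as E. unfold Rsqr in E.
  replace ((r * cos mu) ^ 2 + (r * sin mu) ^ 2) with (r^2) by
    (transitivity (r^2 * (sin mu * sin mu + cos mu * cos mu)); [rewrite E; ring | ring]).
  apply sqrt_pow2; auto.
Qed.

Lemma polar_Im r r2 mu1 mu2 :
  Im (Cmult (polar r mu1) (Cconj (polar r2 mu2))) = r*r2*sin (mu1-mu2).
Proof. rewrite sin_minus. unfold polar, Cmult, Cconj; cbn [fst snd Im]. ring. Qed.

Lemma Cmod_scal k p : 0 <= k -> Cmod (Cmult (RtoC k) p) = k * Cmod p.
Proof. intro H. rewrite Cmod_mult, Cmod_R, Rabs_pos_eq; auto. Qed.

Lemma w_bounds p1 p2 : in_D p1 -> in_D p2 ->
  (1 - Cmod p2^2)*Cmod p1 - (1 - Cmod p1^2)*Cmod p2 <= rho_s p1 p2 * (1 - (Cmod p1 * Cmod p2)^2)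
  <= (1 - Cmod p2^2)*Cmod p1 + (1 - Cmod p1^2)*Cmod p2.
Proof.
  intros H1 H2. destruct (modD _ H1) as [M1 M1']; destruct (modD _ H2) as [M2 M2'].
  assert (Hm : 0 <= Cmod p1 * Cmod p2 < 1) by (split; nra).
  assert (HD : 0 < 1 - (Cmod p1 * Cmod p2)^2) by nra.
  unfold rho_s. rewrite moda.
  set (w := Cplus (Cmult (RtoC (1 - Cmod p2 ^ 2)) p1) (Cmult (RtoC (1 - Cmod p1 ^ 2)) p2)).
  replace (Cmod w / (1 - (Cmod p1 * Cmod p2) ^ 2) * (1 - (Cmod p1 * Cmod p2) ^ 2)) with (Cmod w)
    by (field; lra).
  assert (k1 : 0 <= 1 - Cmod p2 ^2) by nra. assert (k2 : 0 <= 1 - Cmod p1 ^2) by nra.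
  split.
  - pose proof (Cmod_triangle w (Copp (Cmult (RtoC (1 - Cmod p1 ^ 2)) p2))) as T.
    replace (Cplus w (Copp (Cmult (RtoC (1 - Cmod p1 ^ 2)) p2))) with (Cmult (RtoC (1 - Cmod p2 ^ 2)) p1)
      in T by (unfold w; ring).
    rewrite Cmod_opp, !Cmod_scal in T; auto. lra.
  - pose proof (Cmod_triangle (Cmult (RtoC (1 - Cmod p2 ^ 2)) p1) (Cmult (RtoC (1 - Cmod p1 ^ 2)) p2)) as T.
    rewrite !Cmod_scal in T; auto.
Qed.

Lemma ball_R (x : R) (e : posreal) (y : R) : ball x e y -> x - e < y < x + e.
Proof.
  intro Hy. unfold ball in Hy; simpl in Hy; unfold AbsRing_ball in Hy; simpl in Hy;
  unfold abs, minus, plus, opp in Hy; simpl in Hy.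
  apply Rabs_lt_between' in Hy. exact Hy.
Qed.

Lemma lim_pos r2 mu1 mu2 : 0 < r2 < 1 -> sin (mu1 - mu2) > 0 ->
  filterlim (fun r1 => skew_s (polar r1 mu1) (polar r2 mu2)) (at_left 1) (Rbar_locally p_infty).
Proof.
  intros Hr2 HS.
  set (S := sin (mu1 - mu2)) in *.
  set (C := (1+r2)/(1-r2)).
  assert (HC : 0 < C) by (unfold C; apply Rdiv_lt_0_compat; lra).
  set (K := ((1-r2)^2 * (r2*S/2) * ((1-r2^2)/2) * (1-r2^2)) / C).
  assert (HK : 0 < K).
  { unfold K. apply Rdiv_lt_0_compat; auto. repeat apply Rmult_lt_0_compat; nra. }
  intros P [M HM].
  set (b := K / (Rabs M + 1)).
  assert (Hb : 0 < b) by (unfold b; apply Rdiv_lt_0_compat; auto; pose proof (Rabs_pos M); lra).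
  assert (He : 0 < Rmin (Rmin (1/2) ((1-r2^2)/4)) (b^2 / C)).
  { assert (0 < b^2) by nra. assert (0 < b^2/C) by (apply Rdiv_lt_0_compat; lra).
    assert (0 < (1-r2^2)/4) by (apply Rdiv_lt_0_compat; nra).
    repeat apply Rmin_glb_lt; lra. }
  exists (mkposreal _ He). intros y Hy Hy1.
  apply ball_R in Hy. cbn [pos] in Hy.
  pose proof (Rmin_l (Rmin (1/2) ((1-r2^2)/4)) (b^2 / C)) as E1.
  pose proof (Rmin_r (Rmin (1/2) ((1-r2^2)/4)) (b^2 / C)) as E2.
  pose proof (Rmin_l (1/2) ((1-r2^2)/4)) as E3.
  pose proof (Rmin_r (1/2) ((1-r2^2)/4)) as E4.
  set (e := Rmin (Rmin (1/2) ((1-r2^2)/4)) (b^2 / C)) in *.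
  assert (Hy2 : 1/2 <= y) by lra.
  assert (Hy3 : 1 - y < (1 - r2^2)/4) by lra.
  assert (Hy4 : C * (1 - y) < b^2).
  { assert (1 - y < b^2 / C) by lra.
    apply (Rmult_lt_compat_l C) in H; auto.
    replace (C * (b^2/C)) with (b^2) in H by (field; lra). exact H. }
  apply HM.
  assert (D1 : in_D (polar y mu1)) by (unfold in_D; rewrite polar_mod; lra).
  assert (D2 : in_D (polar r2 mu2)) by (unfold in_D; rewrite polar_mod; lra).
  pose proof (w_bounds _ _ D1 D2) as WB.
  destruct (modA _ _ D1 D2) as [_ HA].
  rewrite skew_F, moda, polar_Im. unfold F.
  rewrite !polar_mod in WB, HA |- * by lra.
  fold S.
  set (rho := rho_s (polar y mu1) (polar r2 mu2)) in *.
  set (A := Cmod (Cminus (RtoC 1) (Cmult (polar y mu1) (Cconj (polar r2 mu2))))) in *.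
  assert (HD : 0 < 1 - (y*r2)^2 <= 1) by (split; nra).
  assert (Hlow : 0 < (1 - r2^2)*y - (1 - y^2)*r2).
  { assert ((1+y)*r2 <= 2) by nra.
    assert ((1 - y^2)*r2 <= 2*(1-y)) by (replace ((1 - y^2)*r2) with ((1-y)*((1+y)*r2)) by ring; nra).
    assert ((1 - r2^2)*y >= (1-r2^2)/2) by nra. lra. }
  destruct WB as [WB1 WB2].
  assert (Hrho0 : 0 < rho).
  { destruct (Rle_or_lt rho 0) as [Hn|Hn]; [|exact Hn].
    assert (rho * (1 - (y*r2)^2) <= 0) by (apply Rmult_le_0_r; lra). lra. }
  assert (Hrho1 : rho < 1).
  { assert (1 - (y*r2)^2 - ((1 - r2^2)*y + (1 - y^2)*r2) = (1-y)*(1-r2)*(1-y*r2)) by ring.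
    assert (0 < (1-y)*(1-r2)*(1-y*r2)) by (repeat apply Rmult_lt_0_compat; nra).
    destruct (Rle_or_lt 1 rho) as [Hn|Hn]; [|exact Hn].
    assert (1 * (1 - (y*r2)^2) <= rho * (1 - (y*r2)^2)) by (apply Rmult_le_compat_r; lra). lra. }
  assert (Hrho2 : 1 - rho <= C * (1 - y)).
  { assert (Q1 : (1 - rho) * (1 - (y*r2)^2) <= (1-y)*(1+r2)*(1+r2*y)) by nra.
    assert (1 - r2 <= 1 - y*r2) by nra.
    assert (0 <= 1 + r2*y) by nra.
    assert (Q2' : (1+r2*y)*(1-r2) <= (1+r2*y)*(1-y*r2)) by (apply Rmult_le_compat_l; lra).
    assert (Q2 : (1+r2)*(1+r2*y)*(1-r2) <= (1+r2) * (1 - (y*r2)^2)).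
    { replace ((1+r2)*(1+r2*y)*(1-r2)) with ((1+r2)*((1+r2*y)*(1-r2))) by ring.
      replace (1 - (y*r2)^2) with ((1+r2*y)*(1-y*r2)) by ring.
      apply Rmult_le_compat_l; lra. }
    assert (Q3 : (1+r2)*(1+r2*y) <= C * (1 - (y*r2)^2)).
    { unfold C. apply (Rmult_le_reg_r (1-r2)); [lra|].
      replace ((1 + r2) / (1 - r2) * (1 - (y * r2) ^ 2) * (1 - r2)) with ((1+r2) * (1 - (y*r2)^2))
        by (field; lra). lra. }
    assert (Q5 : (1-y) * ((1+r2)*(1+r2*y)) <= (1-y) * (C * (1 - (y*r2)^2))) by (apply Rmult_le_compat_l; lra).
    assert (Q4 : (1 - rho) * (1 - (y*r2)^2) <= (C * (1-y)) * (1 - (y*r2)^2)).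
    { replace ((C * (1-y)) * (1 - (y*r2)^2)) with ((1-y) * (C * (1 - (y*r2)^2))) by ring.
      replace ((1-y)*(1+r2)*(1+r2*y)) with ((1-y) * ((1+r2)*(1+r2*y))) in Q1 by ring. lra. }
    apply Rmult_le_reg_r in Q4; lra. }
  pose proof (core_bound A rho y r2 S Hr2 HS (conj Hy2 Hy1) Hy3 HA (conj Hrho0 Hrho1) Hrho2) as CB.
  fold C in CB. fold K in CB.
  eapply Rlt_le_trans; [| exact CB].
  assert (Hs : sqrt (C * (1 - y)) < b).
  { rewrite <- (sqrt_pow2 b) by lra. apply sqrt_lt_1; nra. }
  assert (Hs0 : 0 < sqrt (C * (1 - y))) by (apply sqrt_lt_R0; nra).
  assert (/ b < / sqrt (C * (1 - y))) by (apply Rinv_lt_contravar; nra).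
  assert (K * / b = Rabs M + 1) by (unfold b; field; pose proof (Rabs_pos M); lra).
  assert (K * / b < K * / sqrt (C * (1 - y))) by (apply Rmult_lt_compat_l; auto).
  pose proof (Rle_abs M). lra.
Qed.


Lemma polar_conj r mu : Cconj (polar r mu) = polar r (- mu).
Proof. unfold polar, Cconj; cbn [fst snd]. rewrite cos_neg, sin_neg. f_equal; ring. Qed.

Lemma lim_neg r2 mu1 mu2 : 0 < r2 < 1 -> sin (mu1 - mu2) < 0 ->
  filterlim (fun r1 => skew_s (polar r1 mu1) (polar r2 mu2)) (at_left 1) (Rbar_locally m_infty).
Proof.
  intros Hr2 HS.
  assert (HS' : sin (- mu1 - - mu2) > 0).
  { replace (- mu1 - - mu2) with (- (mu1 - mu2)) by ring. rewrite sin_neg. lra. }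
  pose proof (lim_pos r2 (-mu1) (-mu2) Hr2 HS') as L.
  apply filterlim_ext with (fun r1 => Ropp (skew_s (polar r1 (-mu1)) (polar r2 (-mu2)))).
  { intro r. rewrite <- !polar_conj, skew_conj. ring. }
  eapply filterlim_comp; [exact L|].
  apply (filterlim_Rbar_opp p_infty).
Qed.

Theorem theorem5 :
  (forall p1 p2 : C, in_D p1 -> in_D p2 -> p1 <> Copp p2 ->
     (skew_s p1 p2 = 0 <-> symmetric_density (dens_f p1 p2)) /\
     (skew_s p1 p2 > 0 <-> Im (Cmult p1 (Cconj p2)) * (Cmod p1 - Cmod p2) > 0) /\
     (skew_s p1 p2 < 0 <-> Im (Cmult p1 (Cconj p2)) * (Cmod p1 - Cmod p2) < 0) /\
     (p1 <> RtoC 0 -> p2 <> RtoC 0 ->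
        skew_s p1 p2 =
          - skew_s p1 (Cmult (Cmult (Cconj p2) (Cmult p1 p1)) (RtoC (/ (Cmod p1)^2))) /\
        skew_s p1 p2 =
          - skew_s (Cmult (Cmult (Cconj p1) (Cmult p2 p2)) (RtoC (/ (Cmod p2)^2))) p2) /\
     skew_s p2 p1 = skew_s p1 p2 /\
     skew_s (Cconj p1) (Cconj p2) = - skew_s p1 p2 /\
     (forall alpha : C, Cmod alpha = 1 ->
        skew_s (Cmult alpha p1) (Cmult alpha p2) = skew_s p1 p2)) /\
  (forall r2 mu1 mu2 : R, 0 < r2 < 1 ->
     (sin (mu1 - mu2) > 0 ->
        filterlim (fun r1 => skew_s (polar r1 mu1) (polar r2 mu2))
          (at_left 1) (Rbar_locally p_infty)) /\
     (sin (mu1 - mu2) < 0 ->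
        filterlim (fun r1 => skew_s (polar r1 mu1) (polar r2 mu2))
          (at_left 1) (Rbar_locally m_infty))).
Proof.
  split.
  - intros p1 p2 H1 H2 _.
    destruct (part12 p1 p2 H1 H2) as [A [B C]].
    split; [exact A|]. split; [exact B|]. split; [exact C|].
    split. { intros N1 N2. split; [apply skew_refl; auto | apply skew_refl2; auto]. }
    split. { apply skew_swap. }
    split. { apply skew_conj. }
    intros al Ha. apply skew_rot; auto.
  - intros r2 mu1 mu2 Hr2. split; [apply lim_pos; auto | apply lim_neg; auto].
Qed.
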